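(* For every $s\in I(\Phi)$ there exists a Weyl chamber $C$ of $\Phi$ which is an S-chamber for $s$, i.e. such that $s(\alpha)\in\Phi^+(C)$ for every $\alpha\in\Phi^+(C)\cap\Phi^s_\star$. Equivalently, $s(\alpha)\in\Phi^+(C)$ for every $\alpha\in\mathcal B(C)\cap\Phi^s_\star$.
   Context: $\Phi$ is a reduced crystallographic root system spanning a real Euclidean space $V$ with inner product $(\cdot|\cdot)$; $A(\Phi)$ is the group of orthogonal maps of $V$ preserving $\Phi$, $I(\Phi)$ its involutions. For $s\in I(\Phi)$: $\Phi^s_\circ=\{\alpha:s\alpha=\alpha\}$, $\Phi^s_\bullet=\{\alpha:s\alpha=-\alpha\}$, $\Phi^s_\star=\Phi\setminus(\Phi^s_\circ\cup\Phi^s_\bullet)$. A Weyl chamber is a connected component $C$ of $\{v\in V:(\alpha|v)\ne0\ \forall\alpha\in\Phi\}$; $\Phi^+(C)=\{\alpha:(\alpha|v)>0\ \forall v\in C\}$ and $\mathcal B(C)$ is the corresponding basis of simple roots. *)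

(* Defs.v *)
From HB Require Import structures.
From mathcomp Require Import all_boot all_order all_algebra.
From mathcomp Require Import all_classical all_reals all_analysis.
Set Implicit Arguments. Unset Strict Implicit. Unset Printing Implicit Defensive.
Import Order.TTheory GRing.Theory Num.Theory.
Import numFieldNormedType.Exports.
Local Open Scope classical_set_scope.
Local Open Scope ring_scope.

(* The Euclidean space V is modelled as R^n = 'rV[R]_n with the standard
   inner product (every finite-dimensional real inner product space is
   isometric to such a space). *)
Definition dotv {R : realType} {n : nat} (u v : 'rV[R]_n) : R :=
  \sum_(i < n) u 0 i * v 0 i.

Definition refl {R : realType} {n : nat} (a b : 'rV[R]_n) : 'rV[R]_n :=
  b - ((2 * dotv b a) / dotv a a) *: a.

Definition root_system {R : realType} {n : nat} (Phi : seq 'rV[R]_n) : Prop :=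
  [/\ uniq Phi /\ (0 : 'rV[R]_n) \notin Phi,
      (\sum_(a <- Phi) <<a>> == 1%:M)%MS,
      (forall a b, a \in Phi -> b \in Phi -> refl a b \in Phi),
      (forall a b, a \in Phi -> b \in Phi ->
         (2 * dotv b a) / dotv a a \is a Num.int) &
      (forall a (c : R), a \in Phi -> c *: a \in Phi -> c = 1 \/ c = -1)].

Definition in_A {R : realType} {n : nat} (Phi : seq 'rV[R]_n) (S : 'M[R]_n) : Prop :=
  S *m S^T = 1%:M /\ (forall a, a \in Phi -> a *m S \in Phi).

Definition in_I {R : realType} {n : nat} (Phi : seq 'rV[R]_n) (S : 'M[R]_n) : Prop :=
  in_A Phi S /\ S *m S = 1%:M.

Definition Phi_star {R : realType} {n : nat} (Phi : seq 'rV[R]_n) (S : 'M[R]_n)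
  (a : 'rV[R]_n) : Prop :=
  a \in Phi /\ a *m S <> a /\ a *m S <> - a.

Definition regular_set {R : realType} {n : nat} (Phi : seq 'rV[R]_n) : set 'rV[R]_n :=
  [set v | forall a, a \in Phi -> dotv a v != 0].

Definition weyl_chamber {R : realType} {n : nat} (Phi : seq 'rV[R]_n)
  (C : set 'rV[R]_n) : Prop :=
  exists2 v, regular_set Phi v & C = connected_component (regular_set Phi) v.

Definition pos_roots {R : realType} {n : nat} (Phi : seq 'rV[R]_n)
  (C : set 'rV[R]_n) (a : 'rV[R]_n) : Prop :=
  a \in Phi /\ (forall v, C v -> 0 < dotv a v).

(* Main.v *)
Set Warnings "-all".
Require Import Defs.
From HB Require Import structures.
From mathcomp Require Import all_boot all_order all_algebra.
From mathcomp Require Import all_classical all_reals all_analysis.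
From mathcomp Require Import ring lra.
Import Order.TTheory GRing.Theory Num.Theory.
Import numFieldNormedType.Exports.
Local Open Scope classical_set_scope.
Local Open Scope ring_scope.

Section Dot.
Variables (R : realType) (n : nat).
Implicit Types a b x y : 'rV[R]_n.

Lemma dotvDl a b x : dotv (a + b) x = dotv a x + dotv b x.
Proof. by rewrite /dotv -big_split; apply: eq_bigr => i _; rewrite mxE mulrDl. Qed.
Lemma dotvDr a x y : dotv a (x + y) = dotv a x + dotv a y.
Proof. by rewrite /dotv -big_split; apply: eq_bigr => i _; rewrite mxE mulrDr. Qed.
Lemma dotvNl a x : dotv (- a) x = - dotv a x.
Proof. by rewrite /dotv -sumrN; apply: eq_bigr => i _; rewrite mxE mulNr. Qed.
Lemma dotvNr a x : dotv a (- x) = - dotv a x.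
Proof. by rewrite /dotv -sumrN; apply: eq_bigr => i _; rewrite mxE mulrN. Qed.
Lemma dotvZr a c x : dotv a (c *: x) = c * dotv a x.
Proof. by rewrite /dotv mulr_sumr; apply: eq_bigr => i _; rewrite mxE mulrCA. Qed.
Lemma dotvZl a c x : dotv (c *: a) x = c * dotv a x.
Proof. by rewrite /dotv mulr_sumr; apply: eq_bigr => i _; rewrite mxE mulrA. Qed.
Lemma dotv_mx a x (M : 'M[R]_n) : dotv a (x *m M) = dotv (a *m M^T) x.
Proof.
rewrite /dotv.
under eq_bigr do rewrite mxE big_distrr.
rewrite exchange_big; apply: eq_bigr => j _.
rewrite mxE big_distrl; apply: eq_bigr => i _.
by rewrite !mxE /= mulrA -!mulrA [M j i * _]mulrC.
Qed.
Lemma dotv0l x : dotv (0 : 'rV[R]_n) x = 0.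
Proof. by rewrite /dotv big1 // => i _; rewrite mxE mul0r. Qed.
End Dot.
Lemma dotv_cont (R : realType) n (a : 'rV[R]_n) : continuous (fun w : 'rV[R]_n => dotv a w).
Proof.
rewrite /dotv.
suff H : forall s : seq 'I_n, continuous (fun w : 'rV[R]_n => \sum_(i <- s) a 0 i * w 0 i).
  exact: (H (index_enum _)).
elim=> [|i s IH].
  have -> : (fun w : 'rV[R]_n => \sum_(i <- [::]) a 0 i * w 0 i) = fun=> 0.
    by apply: funext => w; rewrite big_nil.
  by move=> x; apply: cst_continuous.
have -> : (fun w : 'rV[R]_n => \sum_(j <- i :: s) a 0 j * w 0 j) =
   (fun w => a 0 i * w 0 i) + (fun w => \sum_(j <- s) a 0 j * w 0 j).
  by apply: funext => w; rewrite big_cons.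
have h1 : continuous (fun w : 'rV[R]_n => a 0 i * w 0 i).
  move=> y; exact: (continuousM (@cst_continuous _ _ (a 0 i) y) (@coord_continuous R 1 n 0 i y)).
move=> x; exact: (continuousD (h1 x) (IH x)).
Qed.

Lemma sign_const (R : realType) n (Phi : seq 'rV[R]_n) a u w :
  a \in Phi -> connected_component (regular_set Phi) u w ->
  0 < dotv a u -> 0 < dotv a w.
Proof.
move=> aP Cw fu.
set C := connected_component (regular_set Phi) u.
have Cu : C u.
  apply: connected_component_refl; apply: contrapT => nu.
  by move: Cw; rewrite /C connected_component_out.
have cC : connected ((fun x => dotv a x) @` C).
  apply: connected_continuous_connected; first exact: component_connected.
  by apply: continuous_subspaceT => x; apply: dotv_cont.
move/connected_intervalP: cC => iC.
rewrite ltNge; apply/negP => fw.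
have [z Cz z0] : ((fun x => dotv a x) @` C) 0.
  by apply: (iC (dotv a w) (dotv a u)); [exists w|exists u|rewrite fw ltW].
have := connected_component_sub Cz _ aP.
by rewrite z0 eqxx.
Qed.
Definition cpoly {R : realType} {n : nat} (b : 'rV[R]_n) : {poly R} :=
  \poly_(k < n) oapp (fun i : 'I_n => b 0 i) 0 (insub k).

Lemma cpoly_neq0 (R : realType) n (b : 'rV[R]_n) : b != 0 -> cpoly b != 0.
Proof.
apply: contraNneq => hb; apply/eqP/matrixP => i j.
rewrite (ord1 i) mxE.
have := congr1 (fun p : {poly R} => p`_j) hb.
by rewrite coef_poly ltn_ord coef0 /= valK /= => <-.
Qed.

Lemma cpoly_eval (R : realType) n (b : 'rV[R]_n) t :
  dotv b (\row_i (t ^+ i)) = (cpoly b).[t].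
Proof.
rewrite horner_poly /dotv; apply: eq_bigr => i _.
by rewrite mxE valK.
Qed.

Lemma generic_point (R : realType) n (B : seq 'rV[R]_n) :
  (forall b, b \in B -> b != 0) -> exists x, forall b, b \in B -> dotv b x != 0.
Proof.
move=> hB.
set p := \prod_(b <- B) cpoly b.
have p0 : p != 0.
  rewrite prodf_seq_neq0; apply/allP => b bB; exact/cpoly_neq0/hB.
have [t pt] : exists t, p.[t] != 0.
  apply: contrapT => nE; move/eqP: p0; apply.
  apply: (@roots_geq_poly_eq0 _ p [seq k%:R | k <- iota 0 (size p)]).
  - by apply/allP => y /mapP [k _ ->]; apply/rootP/eqP; apply: contrapT => hy; apply: nE; exists (k%:R); exact/negP.
  - rewrite map_inj_uniq ?iota_uniq //; exact: (mulrIn (oner_neq0 R)).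
  - by rewrite size_map size_iota.
exists (\row_i (t ^+ i)) => b bB; rewrite cpoly_eval.
move: pt; rewrite /p horner_prod prodf_seq_neq0 => /allP /(_ b bB).
done.
Qed.

Theorem theorem3p10 (R : realType) (n : nat) (Phi : seq 'rV[R]_n) (S : 'M[R]_n) :
  root_system Phi -> in_I Phi S ->
  exists C : set 'rV[R]_n,
    weyl_chamber Phi C /\
    (forall a, pos_roots Phi C a -> Phi_star Phi S a -> pos_roots Phi C (a *m S)).
Proof.
move=> [[uPhi n0] _ _ _ _] [[SST SPhi] SS].
have ST : S^T = S.
  by rewrite -[S^T]mul1mx -SS -mulmxA SST mulmx1.
have dS a x : dotv a (x *m S) = dotv (a *m S) x by rewrite dotv_mx ST.
have aSS a : a *m S *m S = a by rewrite -mulmxA SS mulmx1.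
set B := Phi ++ [seq a + a *m S | a <- Phi & a + a *m S != 0].
have hB : forall b, b \in B -> b != 0.
  move=> b; rewrite mem_cat => /orP [bP|/mapP [a]].
    by apply: contraNneq n0 => <-.
  by rewrite mem_filter => /andP [h _] ->.
have [x hx] := (@generic_point R n B hB).
have inB1 a : a \in Phi -> a \in B by move=> aP; rewrite mem_cat aP.
have inB2 a : a \in Phi -> a + a *m S != 0 -> a + a *m S \in B.
  move=> aP h; rewrite mem_cat; apply/orP; right; apply/mapP; exists a => //.
  by rewrite mem_filter h.
pose A := fun a => dotv (a + a *m S) x.
pose Q := fun a => dotv (a - a *m S) x.
pose K := 1 + \sum_(a <- Phi) Q a ^+ 2 / A a ^+ 2.
have K1 : 1 <= K.
  by rewrite /K lerDl sumr_ge0 // => a _; rewrite divr_ge0 ?sqr_ge0.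
pose e := K^-1.
have K0 : 0 < K by apply: lt_le_trans K1.
have e0 : 0 < e by rewrite invr_gt0.
have eK : e * K = 1 by rewrite mulVf // gt_eqF.
pose u := (x + x *m S) + e *: (x - x *m S).
have du a : dotv a u = A a + e * Q a.
  by rewrite /u dotvDr dotvZr !dotvDr !dotvNr !dS /A /Q !dotvDl dotvNl.
have duS a : dotv (a *m S) u = A a - e * Q a.
  rewrite du /A /Q aSS !dotvDl !dotvNl; ring.
have key a : a \in Phi -> A a != 0 -> 0 < (A a + e * Q a) * (A a - e * Q a).
  move=> aP Aa.
  pose t := Q a ^+ 2 / A a ^+ 2.
  have t0 : 0 <= t by rewrite divr_ge0 ?sqr_ge0.
  have tK : t < K.
    rewrite /K (big_rem a aP) /=.
    have : 0 <= \sum_(y <- rem a Phi) Q y ^+ 2 / A y ^+ 2.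
      by rewrite sumr_ge0 // => y _; rewrite divr_ge0 ?sqr_ge0.
    rewrite -/t; lra.
  have hQ : Q a ^+ 2 = t * A a ^+ 2 by rewrite /t divfK // sqrf_eq0.
  have A2 : 0 < A a ^+ 2 by rewrite exprn_even_gt0.
  have e1 : e <= 1 by rewrite -eK ler_peMr // ltW.
  have et : e ^+ 2 * t < 1.
    have : e ^+ 2 * t < e ^+ 2 * K by rewrite ltr_pM2l // exprn_gt0.
    have -> : e ^+ 2 * K = e by rewrite expr2 -mulrA eK mulr1.
    lra.
  have -> : (A a + e * Q a) * (A a - e * Q a) = A a ^+ 2 - e ^+ 2 * Q a ^+ 2.
    ring.
  rewrite hQ.
  have -> : A a ^+ 2 - e ^+ 2 * (t * A a ^+ 2) = A a ^+ 2 * (1 - e ^+ 2 * t).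
    ring.
  by rewrite mulr_gt0 // subr_gt0.
have reg : regular_set Phi u.
  move=> a aP; rewrite du.
  case: (eqVneq (a + a *m S) 0) => h.
    have hA : A a = 0 by rewrite /A h dotv0l.
    have haS : a *m S = - a by apply/eqP; rewrite -addr_eq0 addrC; apply/eqP.
    have hQ : Q a = 2 * dotv a x by rewrite /Q haS opprK dotvDl; ring.
    rewrite hA add0r hQ; apply: mulf_neq0; first by rewrite gt_eqF.
    apply: mulf_neq0; first by rewrite pnatr_eq0.
    exact/hx/inB1.
  have Aa : A a != 0 by apply: hx; apply: inB2.
  have := key a aP Aa.
  by apply: contraTneq => ->; rewrite mul0r ltxx.
exists (connected_component (regular_set Phi) u); split.
  by exists u.
move=> a [aP apos] [_ [aSa aSn]].
split; first exact: SPhi.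
have Au : 0 < dotv a u by apply: apos; apply: connected_component_refl.
have Aa : A a != 0.
  apply: hx; apply: inB2 => //.
  by apply/eqP => h; apply: aSn; apply/eqP; rewrite -addr_eq0 addrC; apply/eqP.
have pos : 0 < dotv (a *m S) u.
  have := key a aP Aa; rewrite -du -duS.
  by rewrite pmulr_rgt0.
by move=> w Cw; apply: sign_const (SPhi a aP) Cw pos.
Qed.
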